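(* Suppose there exists a subspace $\mathcal C\subseteq V$ of dimension $K$ with orthogonal projector $P$ that detects every error in $\mathcal E_\xi$ for each $\xi$ in a prescribed set $\mathcal S$ of irreducible types. Then there exist Hermitian matrices $A_\xi,B_\xi\in\mathbb C^{m_\xi\times m_\xi}$, for all types $\xi$ occurring in $\mathcal L(V)$, satisfying: $0\preceq A_\xi$ for all $\xi$; $A_\xi\preceq KB_\xi$ for all $\xi$; $\sum_\xi\mathrm{Tr}A_\xi=K$; $\sum_\xi\mathrm{Tr}B_\xi=K^2$; $\mathrm{vec}(B)=M\,\mathrm{vec}(A)$; and $A_\xi=KB_\xi$ for all $\xi\in\mathcal S$. One may take $A_\xi=A_\xi(P)$, $B_\xi=B_\xi(P)$. In particular, infeasibility of this semidefinite system certifies that no $K$-dimensional subspace of $V$ detects all errors in the sectors $\mathcal E_\xi$, $\xi\in\mathcal S$.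
   Context: Let $G$ be a group and $V$ a finite-dimensional complex Hilbert space with a unitary representation $\rho$ of $G$; $G$ acts on $\mathcal L(V)$ by conjugation, unitarily for $\langle X_1,X_2\rangle=\mathrm{Tr}(X_1^\dagger X_2)$. Let $\mathcal L(V)=\bigoplus_\xi\mathcal E_\xi$ be the isotypic decomposition, $m_\xi$ the multiplicity and $d_\xi$ the dimension of type $\xi$. Choose an orthogonal decomposition $\mathcal E_\xi=\bigoplus_{\alpha=1}^{m_\xi}\mathcal E_{\xi\alpha}$ into irreducibles, $G$-equivariant isometric isomorphisms $\phi^\xi_{1\alpha}:\mathcal E_{\xi1}\to\mathcal E_{\xi\alpha}$ ($\phi^\xi_{11}=\mathrm{id}$), an orthonormal basis $\{E_i^1\}_{i=1}^{d_\xi}$ of $\mathcal E_{\xi1}$, and put $E_i^\alpha=\phi^\xi_{1\alpha}(E_i^1)$. Projector matrix units $\Pi_{\xi\alpha\beta}(X)=\sum_i\langle E_i^\alpha,X\rangle E_i^\beta$; twirl matrix units $\mathrm{Twirl}_{\xi\alpha\beta}(X)=\sum_i(E_i^\alpha)^\dagger XE_i^\beta$. Matrix enumerators $[A_\xi(X)]_{\alpha\beta}=\langle X,\Pi_{\xi\alpha\beta}(X)\rangle$, $[B_\xi(X)]_{\alpha\beta}=\langle X,\mathrm{Twirl}_{\xi\alpha\beta}(X)\rangle$. The block MacWilliams matrix is $M_{(\xi,\alpha,\beta),(\rho,\mu,\nu)}=\frac1{d_\xi}\langle\!\langle\Pi_{\xi\alpha\beta},\mathrm{Twirl}_{\rho\mu\nu}\rangle\!\rangle$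 with $\langle\!\langle\mathcal S,\mathcal T\rangle\!\rangle=\mathrm{Tr}(\mathcal S^\dagger\mathcal T)$, and $\mathrm{vec}(B)=M\,\mathrm{vec}(A)$ means $[B_\rho]_{\mu\nu}=\sum_{\xi,\alpha,\beta}M_{(\xi,\alpha,\beta),(\rho,\mu,\nu)}[A_\xi]_{\alpha\beta}$ for all $\rho,\mu,\nu$. $\preceq$ is the Loewner order. A subspace with orthogonal projector $P$ detects every error in $\mathcal F\subseteq\mathcal L(V)$ if for every $E\in\mathcal F$ there is $c_E\in\mathbb C$ with $PEP=c_EP$. *)

(* Defs.v *)
From HB Require Import structures.
From mathcomp Require Import all_boot all_order all_algebra.
From mathcomp Require Import reals complex.
Set Implicit Arguments. Unset Strict Implicit. Unset Printing Implicit Defensive.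
Import Order.TTheory GRing.Theory Num.Theory.
Local Open Scope ring_scope.

Section Defs.
Variable R : realType.
Local Notation C := R[i].

Record group_on (G : Type) := GroupOn {
  gmul : G -> G -> G;
  gone : G;
  ginv : G -> G;
  gmulA : forall x y z, gmul x (gmul y z) = gmul (gmul x y) z;
  gmul1g : forall x, gmul gone x = x;
  gmulVg : forall x, gmul (ginv x) x = gone }.

Definition adj m n (X : 'M[C]_(m, n)) : 'M[C]_(n, m) := (map_mx Num.conj X)^T.

Definition hs n (X Y : 'M[C]_n) : C := \tr (adj X *m Y).

Definition unitary_rep n (G : Type) (gr : group_on G) (rho : G -> 'M[C]_n) :=
  rho (gone gr) = 1%:M /\
  (forall g h, rho (gmul gr g h) = rho g *m rho h) /\
  (forall g, rho g *m adj (rho g) = 1%:M).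

Definition act n (G : Type) (rho : G -> 'M[C]_n) (g : G) (X : 'M[C]_n) :=
  rho g *m X *m adj (rho g).

Definition herm_mx m (A : 'M[C]_m) := adj A = A.
Definition psd_mx m (A : 'M[C]_m) :=
  herm_mx A /\ forall v : 'cV[C]_m, 0 <= (adj v *m A *m v) 0 0.
Definition loewner_le m (A B : 'M[C]_m) := psd_mx (B - A).

Definition orth_projector n (P : 'M[C]_n) := adj P = P /\ P *m P = P.

(* ----- Decomposition data -----
   Xi : the irreducible types occurring in L(V);
   m xi : multiplicity, d xi : dimension;
   E xi a i = E_i^a for the type xi. *)
Variables (n : nat) (Xi : finType) (m d : Xi -> nat)
  (E : forall xi, 'I_(m xi) -> 'I_(d xi) -> 'M[C]_n).

Definition Eflat (k : {xi : Xi & ('I_(m xi) * 'I_(d xi))%type}) : 'M[C]_n :=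
  E (tagged k).1 (tagged k).2.

(* row-space (of vectorised matrices) of E_{xi alpha} *)
Definition Espan xi (a : 'I_(m xi)) : 'M[C]_(d xi, n * n) :=
  \matrix_(i < d xi) mxvec (E a i).

Definition g_invariant (G : Type) (rho : G -> 'M[C]_n) k (W : 'M[C]_(k, n * n)) :=
  forall g (v : 'rV[C]_(n * n)),
    (v <= W)%MS -> (mxvec (act rho g (vec_mx v)) <= W)%MS.

Definition irreducible_sub (G : Type) (rho : G -> 'M[C]_n) xi (a : 'I_(m xi)) :=
  Espan a != 0 /\
  forall k (W : 'M[C]_(k, n * n)), (W <= Espan a)%MS -> g_invariant rho W ->
    W = 0 \/ (Espan a <= W)%MS.

Definition Pimu xi (a b : 'I_(m xi)) (X : 'M[C]_n) : 'M[C]_n :=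
  \sum_(i < d xi) hs (E a i) X *: E b i.

Definition Twirl xi (a b : 'I_(m xi)) (X : 'M[C]_n) : 'M[C]_n :=
  \sum_(i < d xi) adj (E a i) *m X *m E b i.

Definition Aenum (X : 'M[C]_n) xi : 'M[C]_(m xi) :=
  \matrix_(a, b) hs X (Pimu a b X).
Definition Benum (X : 'M[C]_n) xi : 'M[C]_(m xi) :=
  \matrix_(a, b) hs X (Twirl a b X).

(* Hilbert-Schmidt inner product of superoperators, <<S,T>> = Tr(S^dagger T),
   computed in the orthonormal basis of matrix units of L(V). *)
Definition sdot (S T : 'M[C]_n -> 'M[C]_n) : C :=
  \sum_(i < n) \sum_(j < n) hs (S (delta_mx i j)) (T (delta_mx i j)).

Definition MacW xi (a b : 'I_(m xi)) rh (mu nu : 'I_(m rh)) : C :=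
  (d xi)%:R^-1 * sdot (Pimu a b) (Twirl mu nu).

Definition macwilliams_rel (A B : forall xi, 'M[C]_(m xi)) :=
  forall rh (mu nu : 'I_(m rh)),
    B rh mu nu = \sum_xi \sum_(a < m xi) \sum_(b < m xi) MacW a b mu nu * A xi a b.

Definition detects_sector (P : 'M[C]_n) xi :=
  forall c : 'I_(m xi) -> 'I_(d xi) -> C,
    exists cE : C,
      P *m (\sum_(a < m xi) \sum_(i < d xi) c a i *: E a i) *m P = cE *: P.

End Defs.

(* Main.v *)
Require Import Defs.
From HB Require Import structures.
From mathcomp Require Import all_boot all_order all_algebra.
From mathcomp Require Import reals complex.
From mathcomp Require Import ring.
Import Order.TTheory GRing.Theory Num.Theory.
Local Open Scope ring_scope.

Set Implicit Arguments. Unset Strict Implicit. Unset Printing Implicit Defensive.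


Section HS.
Variable R : realType.
Local Notation C := R[i].

Lemma dadjE m n (X : 'M[C]_(m, n)) i j : adj X i j = (X j i)^*.
Proof. by rewrite /adj !mxE. Qed.

Lemma dadjK m n (X : 'M[C]_(m, n)) : adj (adj X) = X.
Proof. by apply/matrixP => i j; rewrite !dadjE conjCK. Qed.

Lemma dadjM m n p (X : 'M[C]_(m, n)) (Y : 'M[C]_(n, p)) :
  adj (X *m Y) = adj Y *m adj X.
Proof. by rewrite /adj map_mxM trmx_mul. Qed.

Lemma dadjD m n (X Y : 'M[C]_(m, n)) : adj (X + Y) = adj X + adj Y.
Proof. by apply/matrixP => i j; rewrite !(dadjE, mxE) rmorphD. Qed.

Lemma dadjZ m n c (X : 'M[C]_(m, n)) : adj (c *: X) = c^* *: adj X.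
Proof. by apply/matrixP => i j; rewrite !(dadjE, mxE) rmorphM. Qed.

Lemma dadjN m n (X : 'M[C]_(m, n)) : adj (- X) = - adj X.
Proof. by apply/matrixP => i j; rewrite !(dadjE, mxE) rmorphN. Qed.

Lemma dadj_sum m n (I : finType) (F : I -> 'M[C]_(m, n)) :
  adj (\sum_i F i) = \sum_i adj (F i).
Proof.
apply/matrixP => p q; rewrite dadjE !summxE rmorph_sum.
by apply: eq_bigr => i _; rewrite dadjE.
Qed.

Lemma dadj1 k : adj (1%:M : 'M[C]_k) = 1%:M.
Proof. by apply/matrixP => i j; rewrite dadjE !mxE (eq_sym j) rmorph_nat. Qed.

Lemma hsE n (X Y : 'M[C]_n) : hs X Y = \sum_p \sum_q (X p q)^* * Y p q.
Proof.
rewrite /hs /mxtrace; under eq_bigr do rewrite mxE.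
rewrite exchange_big; apply: eq_bigr => p _.
by apply: eq_bigr => q _; rewrite dadjE.
Qed.

Lemma hsC n (X Y : 'M[C]_n) : (hs X Y)^* = hs Y X.
Proof.
rewrite !hsE rmorph_sum; apply: eq_bigr => p _; rewrite rmorph_sum.
apply: eq_bigr => q _; by rewrite rmorphM /= conjCK mulrC.
Qed.

Lemma hsDr n (X Y Z : 'M[C]_n) : hs X (Y + Z) = hs X Y + hs X Z.
Proof. by rewrite /hs mulmxDr mxtraceD. Qed.

Lemma hsZr n c (X Y : 'M[C]_n) : hs X (c *: Y) = c * hs X Y.
Proof. by rewrite /hs -scalemxAr mxtraceZ. Qed.

Lemma hsNr n (X Y : 'M[C]_n) : hs X (- Y) = - hs X Y.
Proof. by rewrite -scaleN1r hsZr mulN1r. Qed.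

Lemma hs_sumr n (I : finType) (X : 'M[C]_n) (F : I -> 'M[C]_n) :
  hs X (\sum_i F i) = \sum_i hs X (F i).
Proof. by rewrite /hs mulmx_sumr raddf_sum. Qed.

Lemma hsZl n c (X Y : 'M[C]_n) : hs (c *: X) Y = c^* * hs X Y.
Proof. by by rewrite -hsC hsZr rmorphM /= hsC. Qed.

Lemma hsDl n (X Y Z : 'M[C]_n) : hs (Y + Z) X = hs Y X + hs Z X.
Proof. by by rewrite -hsC hsDr rmorphD /= !hsC. Qed.

Lemma hs_suml n (I : finType) (X : 'M[C]_n) (F : I -> 'M[C]_n) :
  hs (\sum_i F i) X = \sum_i hs (F i) X.
Proof.
rewrite -hsC hs_sumr rmorph_sum; apply: eq_bigr => i _; exact: hsC.
Qed.

Lemma hs_delta n (X : 'M[C]_n) p q : hs (delta_mx p q) X = X p q.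
Proof.
rewrite hsE (bigD1 p) //= [X in _ + X]big1 ?addr0; last first.
  move=> p' /negbTE Hp; apply: big1 => q' _.
  by rewrite mxE Hp /= rmorph0 mul0r.
rewrite (bigD1 q) //= [X in _ + X]big1 ?addr0; last first.
  by move=> q' /negbTE Hq; rewrite mxE Hq andbF rmorph0 mul0r.
by rewrite mxE !eqxx rmorph1 mul1r.
Qed.

Lemma hs_ge0 n (X : 'M[C]_n) : 0 <= hs X X.
Proof.
rewrite hsE; apply: sumr_ge0 => p _; apply: sumr_ge0 => q _.
by rewrite mulrC mul_conjC_ge0.
Qed.

Lemma sum_ge0_eq0 (I : finType) (F : I -> C) :
  (forall i, 0 <= F i) -> \sum_i F i = 0 -> forall i, F i = 0.
Proof.
move=> H /eqP; rewrite psumr_eq0 // => /allP Hall i.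
exact/eqP/(Hall i (mem_index_enum i)).
Qed.

Lemma hs_eq0 n (X : 'M[C]_n) : hs X X = 0 -> X = 0.
Proof.
have Hge : forall x : C, 0 <= x^* * x by move=> x; rewrite mulrC mul_conjC_ge0.
rewrite hsE => H; apply/matrixP => p q; rewrite mxE.
have H1 := sum_ge0_eq0 (fun p => sumr_ge0 _ (fun q _ => Hge (X p q))) H p.
have := sum_ge0_eq0 (fun q => Hge (X p q)) H1 q.
by move/eqP; rewrite mulrC mul_conjC_eq0 => /eqP.
Qed.

Lemma hs_tr n (X Y : 'M[C]_n) : hs X Y = \tr (adj X *m Y).
Proof. by []. Qed.

End HS.


Lemma tr_idem (F : fieldType) n (P : 'M[F]_n) : P *m P = P -> \tr P = (\rank P)%:R.
Proof.
move=> PP.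
have hP := mulmx_base P.
have [B HB] := row_fullP (col_base_full P).
have [B' HB'] := row_freeP (row_base_free P).
move: (col_base P) (row_base P) hP HB HB' => Cb Rb hP HB HB'.
have H1 : Rb *m Cb = 1%:M.
  have -> : Rb *m Cb = B *m (Cb *m Rb) *m (Cb *m Rb) *m B'.
    by rewrite !mulmxA HB mul1mx -!mulmxA HB' mulmx1.
  rewrite hP -(mulmxA B P P) PP.
  have -> : B *m P *m B' = B *m (Cb *m Rb) *m B' by rewrite hP.
  by rewrite mulmxA HB mul1mx HB'.
have -> : \tr P = \tr (Cb *m Rb) by rewrite hP.
by rewrite mxtrace_mulC H1 mxtrace1.
Qed.


Section Basis.
Variable R : realType.
Local Notation C := R[i].
Variables (n : nat) (Xi : finType) (m d : Xi -> nat)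
  (E : forall xi, 'I_(m xi) -> 'I_(d xi) -> 'M[C]_n).
Local Notation Kt := {xi : Xi & ('I_(m xi) * 'I_(d xi))%type}.
Local Notation Ef := (Eflat E).
Hypothesis Hon : forall k l, hs (Ef k) (Ef l) = (k == l)%:R.
Hypothesis Hsp : forall X : 'M[C]_n, exists c, X = \sum_k c k *: Ef k.

Lemma sumKt (F : Kt -> C) :
  \sum_k F k = \sum_xi \sum_(a < m xi) \sum_(i < d xi) F (Tagged _ (a, i)).
Proof.
have H := sig_big_dep xpredT (fun _ => xpredT)
  (fun xi (p : 'I_(m xi) * 'I_(d xi)) => F (Tagged (fun xi => ('I_(m xi) * 'I_(d xi))%type) p)).
transitivity (\sum_xi \sum_(p : 'I_(m xi) * 'I_(d xi)) F (Tagged _ p)).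
  by rewrite H; apply: eq_bigr => -[xi p].
apply: eq_bigr => xi _; rewrite pair_big /=; apply: eq_bigr => -[a i] //.
Qed.

Lemma hsE_same xi (a b : 'I_(m xi)) (i j : 'I_(d xi)) :
  hs (E a i) (E b j) = ((a == b) && (i == j))%:R.
Proof.
have := Hon (Tagged _ (a, i)) (Tagged (fun xi => ('I_(m xi) * 'I_(d xi))%type) (b, j)).
by rewrite /Eflat /= eq_Tagged /=.
Qed.

Lemma hsE_diff xi xi' (a : 'I_(m xi)) (b : 'I_(m xi')) (i : 'I_(d xi)) (j : 'I_(d xi')) :
  xi != xi' -> hs (E a i) (E b j) = 0.
Proof.
move=> Hne.
have := Hon (Tagged _ (a, i)) (Tagged (fun xi => ('I_(m xi) * 'I_(d xi))%type) (b, j)).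
rewrite /Eflat /= => ->.
case: eqP => // /(congr1 tag) /= H; by rewrite H eqxx in Hne.
Qed.

Lemma expandE (X : 'M[C]_n) : X = \sum_k hs (Ef k) X *: Ef k.
Proof.
have [c Hc] := Hsp X.
have Hcoef : forall l, hs (Ef l) X = c l.
  move=> l; rewrite Hc hs_sumr (bigD1 l) //= hsZr Hon eqxx mulr1.
  rewrite big1 ?addr0 // => k Hk; rewrite hsZr Hon.
  by rewrite eq_sym (negbTE Hk) mulr0.
by rewrite {1}Hc; apply: eq_bigr => k _; rewrite Hcoef.
Qed.

Lemma parseval (X Y : 'M[C]_n) : hs X Y = \sum_k hs X (Ef k) * hs (Ef k) Y.
Proof.
rewrite {1}(expandE Y) hs_sumr; apply: eq_bigr => k _.
by rewrite hsZr mulrC.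
Qed.

Lemma trace_superop (L : 'M[C]_n -> 'M[C]_n) :
  (forall (I : finType) (X : I -> 'M[C]_n), L (\sum_l X l) = \sum_l L (X l)) ->
  (forall c X, L (c *: X) = c *: L X) ->
  \sum_k hs (Ef k) (L (Ef k)) =
  \sum_p \sum_q hs (delta_mx p q) (L (delta_mx p q)).
Proof.
move=> HL HLz.
have H1 : forall k, hs (Ef k) (L (Ef k)) =
   \sum_p \sum_q hs (delta_mx p q) (Ef k) * hs (Ef k) (L (delta_mx p q)).
  move=> k; rewrite {2}(matrix_sum_delta (Ef k)) HL hs_sumr.
  apply: eq_bigr => p _; rewrite HL hs_sumr; apply: eq_bigr => q _.
  by rewrite HLz hsZr hs_delta.
rewrite (eq_bigr _ (fun k _ => H1 k)) exchange_big; apply: eq_bigr => p _.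
rewrite exchange_big; apply: eq_bigr => q _.
by rewrite parseval.
Qed.

End Basis.


Section Proj.
Variable R : realType.
Local Notation C := R[i].
Variables (n : nat) (P : 'M[C]_n).
Hypothesis HP : orth_projector P.

Lemma adjP : adj P = P. Proof. by case: HP. Qed.
Lemma PP : P *m P = P. Proof. by case: HP. Qed.

Lemma hsJ (X Y : 'M[C]_n) : hs X (P *m Y *m P) = hs (P *m X *m P) Y.
Proof.
rewrite /hs !dadjM adjP !mulmxA mxtrace_mulC !mulmxA.
by [].

Qed.

Lemma hsXP (X : 'M[C]_n) : hs X P = hs (P *m X *m P) P.
Proof. by rewrite -hsJ PP PP. Qed.

Lemma hsPX (X : 'M[C]_n) : hs P X = hs P (P *m X *m P).
Proof. by rewrite -hsC hsXP hsC. Qed.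

Lemma hsXPYP (X Y : 'M[C]_n) : hs X (P *m Y *m P) = hs (P *m X *m P) (P *m Y *m P).
Proof.
by rewrite hsJ [in RHS]hsJ -!mulmxA PP !mulmxA PP.
Qed.

Lemma hsPP : hs P P = (\rank P)%:R.
Proof. by rewrite /hs adjP PP tr_idem // PP. Qed.

End Proj.

Section CS.
Variable R : realType.
Local Notation C := R[i].

Lemma CS n (X P : 'M[C]_n) : hs X P * hs P X <= hs X X * hs P P.
Proof.
set a := hs P P; set b := hs P X; set z := hs X X.
have ha : a^* = a by rewrite /a hsC.
have hb : hs X P = b^* by rewrite /b hsC.
rewrite hb.
have a0 : 0 <= a by exact: hs_ge0.
have [az|anz] := eqVneq a 0.
  have P0 : P = 0 by apply: hs_eq0.
  rewrite az mulr0 /b P0 -(scale0r (0 : 'M[C]_n)) hsZl rmorph0 /= mul0r.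
  by rewrite rmorph0 mul0r.
have apos : 0 < a by rewrite lt_def anz a0.
have HW : hs (a *: X - b *: P) (a *: X - b *: P) = a * (a * z - b^* * b).
  rewrite [LHS]hsDl !hsDr -![in LHS]scaleNr !hsZl !hsZr ha -/z -/a -/b hb rmorphN /=.
  ring.
have := hs_ge0 (a *: X - b *: P); rewrite HW pmulr_rge0 // subr_ge0.
by rewrite [z * _]mulrC.
Qed.

End CS.


Section Enum.
Variable R : realType.
Local Notation C := R[i].
Variables (n : nat) (Xi : finType) (m d : Xi -> nat)
  (E : forall xi, 'I_(m xi) -> 'I_(d xi) -> 'M[C]_n).
Local Notation Kt := {xi : Xi & ('I_(m xi) * 'I_(d xi))%type}.
Local Notation Ef := (Eflat E).
Hypothesis Hon : forall k l, hs (Ef k) (Ef l) = (k == l)%:R.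
Hypothesis Hsp : forall X : 'M[C]_n, exists c, X = \sum_k c k *: Ef k.
Variables (P : 'M[C]_n).
Hypothesis HP : orth_projector P.

Lemma AE xi (a b : 'I_(m xi)) :
  Aenum E P xi a b = \sum_i hs (E a i) P * hs P (E b i).
Proof.
rewrite /Aenum mxE /Pimu hs_sumr; apply: eq_bigr => i _; by rewrite hsZr.
Qed.

Lemma BE xi (a b : 'I_(m xi)) :
  Benum E P xi a b = \sum_i hs (E a i) (P *m E b i *m P).
Proof.
rewrite /Benum mxE /Twirl hs_sumr; apply: eq_bigr => i _.
by rewrite /hs (adjP HP) mxtrace_mulC !mulmxA.
Qed.

Lemma quadE k (v : 'cV[C]_k) (A : 'M[C]_k) :
  (adj v *m A *m v) 0 0 = \sum_a \sum_b (v a 0)^* * A a b * v b 0.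
Proof.
rewrite mxE exchange_big /=; apply: eq_bigr => b _.
rewrite mxE mulr_suml; apply: eq_bigr => a _.
by rewrite dadjE.
Qed.

Definition Yv xi (v : 'cV[C]_(m xi)) (i : 'I_(d xi)) : 'M[C]_n :=
  \sum_a v a 0 *: E a i.

Lemma quad_gen xi (L : 'M[C]_n -> 'M[C]_n) (v : 'cV[C]_(m xi)) :
  (forall (I : finType) (X : I -> 'M[C]_n), L (\sum_l X l) = \sum_l L (X l)) ->
  (forall c X, L (c *: X) = c *: L X) ->
  \sum_a \sum_b (v a 0)^* * (\sum_i hs (E a i) (L (E b i))) * v b 0 =
  \sum_i hs (Yv v i) (L (Yv v i)).
Proof.
move=> HLs HLz.
have -> : \sum_i hs (Yv v i) (L (Yv v i)) =
   \sum_i \sum_a \sum_b (v a 0)^* * hs (E a i) (L (E b i)) * v b 0.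
  apply: eq_bigr => i _; rewrite /Yv hs_suml; apply: eq_bigr => a _.
  rewrite hsZl HLs hs_sumr mulr_sumr; apply: eq_bigr => b _.
  by rewrite HLz hsZr; ring.
rewrite [RHS]exchange_big; apply: eq_bigr => a _.
rewrite [RHS]exchange_big; apply: eq_bigr => b _.
by rewrite mulr_sumr mulr_suml; apply: eq_bigr => i _.
Qed.


Lemma A_herm xi : herm_mx (Aenum E P xi).
Proof.
apply/matrixP => a b; rewrite dadjE !AE rmorph_sum; apply: eq_bigr => i _.
by rewrite rmorphM /= !hsC mulrC.
Qed.

Lemma B_herm xi : herm_mx (Benum E P xi).
Proof.
apply/matrixP => a b; rewrite dadjE !BE rmorph_sum; apply: eq_bigr => i _.
by rewrite /= hsC -(hsJ HP).
Qed.

Lemma quadA xi (v : 'cV[C]_(m xi)) :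
  (adj v *m Aenum E P xi *m v) 0 0 = \sum_i hs (Yv v i) P * hs P (Yv v i).
Proof.
rewrite quadE.
have := @quad_gen xi (fun Z => hs P Z *: P) v.
have H1 : forall (I : finType) (X : I -> 'M[C]_n),
    hs P (\sum_l X l) *: P = \sum_l hs P (X l) *: P.
  by move=> I X; rewrite hs_sumr scaler_suml.
have H2 : forall c X, hs P (c *: X) *: P = c *: (hs P X *: P).
  by move=> c X; rewrite hsZr scalerA.
move=> /(_ H1 H2) H.
have -> : \sum_i hs (Yv v i) P * hs P (Yv v i) =
          \sum_i hs (Yv v i) (hs P (Yv v i) *: P).
  by apply: eq_bigr => i _; rewrite hsZr mulrC.
rewrite -H; apply: eq_bigr => a _; apply: eq_bigr => b _.
rewrite AE; congr (_ * _ * _); apply: eq_bigr => i _.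
by rewrite hsZr mulrC.
Qed.

Lemma quadB xi (v : 'cV[C]_(m xi)) :
  (adj v *m Benum E P xi *m v) 0 0 = \sum_i hs (Yv v i) (P *m Yv v i *m P).
Proof.
rewrite quadE.
have := @quad_gen xi (fun Z => P *m Z *m P) v.
have H1 : forall (I : finType) (X : I -> 'M[C]_n),
    P *m (\sum_l X l) *m P = \sum_l P *m X l *m P.
  by move=> I X; rewrite mulmx_sumr mulmx_suml.
have H2 : forall c X, P *m (c *: X) *m P = c *: (P *m X *m P).
  by move=> c X; rewrite -scalemxAr -scalemxAl.
move=> /(_ H1 H2) <-.
by apply: eq_bigr => a _; apply: eq_bigr => b _; rewrite BE.
Qed.

Lemma A_psd xi : psd_mx (Aenum E P xi).
Proof.
split; first exact: A_herm.
move=> v; rewrite quadA; apply: sumr_ge0 => i _.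
by rewrite -[hs P _]hsC mul_conjC_ge0.
Qed.

Lemma A_loew xi : loewner_le (Aenum E P xi) ((\rank P)%:R *: Benum E P xi).
Proof.
split.
  by rewrite /herm_mx dadjD dadjN dadjZ rmorph_nat A_herm B_herm.
move=> v.
have HA := quadA v; have HB := quadB v.
rewrite quadE in HA; rewrite quadE in HB; rewrite quadE.
have -> : \sum_a \sum_b (v a 0)^* * ((\rank P)%:R *: Benum E P xi - Aenum E P xi) a b * v b 0
  = (\rank P)%:R * (\sum_a \sum_b (v a 0)^* * Benum E P xi a b * v b 0)
    - \sum_a \sum_b (v a 0)^* * Aenum E P xi a b * v b 0.
  rewrite mulr_sumr -sumrB; apply: eq_bigr => a _.
  rewrite mulr_sumr -sumrB; apply: eq_bigr => b _.
  rewrite !mxE; ring.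
rewrite HA HB mulr_sumr -sumrB; apply: sumr_ge0 => i _.
rewrite subr_ge0 (hsXPYP HP) (hsXP HP) (hsPX HP (Yv v i)) -(hsPP HP).
by rewrite mulrC; apply: CS.
Qed.

Lemma sumtrA : \sum_xi \tr (Aenum E P xi) = (\rank P)%:R.
Proof.
rewrite -(hsPP HP) (parseval Hon Hsp) sumKt; apply: eq_bigr => xi _.
rewrite /mxtrace; apply: eq_bigr => a _; rewrite AE; apply: eq_bigr => i _.
by rewrite /Eflat /= mulrC.
Qed.

Lemma delta_entry (A B : 'M[C]_n) p q x y :
  (A *m delta_mx p q *m B) x y = A x p * B q y.
Proof.
rewrite mxE (bigD1 q) //= big1 ?addr0 => [|j Hj]; last first.
  rewrite mxE big1 ?mul0r // => k _; rewrite mxE (negbTE Hj) andbF mulr0 //.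
rewrite mxE (bigD1 p) //= big1 ?addr0 => [|k Hk]; last first.
  by rewrite mxE (negbTE Hk) mulr0.
by rewrite mxE !eqxx mulr1.
Qed.

Lemma sumtrB : \sum_xi \tr (Benum E P xi) = (\rank P)%:R ^+ 2.
Proof.
have -> : \sum_xi \tr (Benum E P xi) = \sum_k hs (Ef k) (P *m Ef k *m P).
  rewrite sumKt; apply: eq_bigr => xi _.
  rewrite /mxtrace; apply: eq_bigr => a _; rewrite BE; apply: eq_bigr => i _.
  by [].
rewrite (trace_superop Hon Hsp (L := fun Z => P *m Z *m P)); last 2 first.
- by move=> I X; rewrite mulmx_sumr mulmx_suml.
- by move=> c X; rewrite -scalemxAr -scalemxAl.
rewrite -tr_idem ?(PP HP) // expr2 /mxtrace mulr_suml; apply: eq_bigr => p _.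
rewrite mulr_sumr; apply: eq_bigr => q _.
by rewrite hs_delta delta_entry.
Qed.

Lemma sum_ind xi (a : 'I_(m xi)) (i : 'I_(d xi)) :
  \sum_(a' < m xi) \sum_(i' < d xi) ((a' == a) && (i' == i))%:R *: E a' i' = E a i.
Proof.
rewrite (bigD1 a) //= [X in _ + X]big1 ?addr0; last first.
  by move=> a' Ha; apply: big1 => i' _; rewrite (negbTE Ha) scale0r.
rewrite (bigD1 i) //= [X in _ + X]big1 ?addr0; last first.
  by move=> i' Hi; rewrite (negbTE Hi) andbF scale0r.
by rewrite !eqxx scale1r.
Qed.

Lemma A_KB_S xi : detects_sector E P xi ->
  Aenum E P xi = (\rank P)%:R *: Benum E P xi.
Proof.
move=> Hdet; apply/matrixP => a b; rewrite AE [RHS]mxE BE mulr_sumr.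
apply: eq_bigr => i _.
have [la Hla] := Hdet (fun a' i' => ((a' == a) && (i' == i))%:R).
have [lb Hlb] := Hdet (fun a' i' => ((a' == b) && (i' == i))%:R).
rewrite !sum_ind in Hla Hlb.
have e1 : hs (E a i) P = la^* * (\rank P)%:R.
  by rewrite (hsXP HP) Hla hsZl (hsPP HP).
have e2 : hs P (E b i) = lb * (\rank P)%:R.
  by rewrite (hsPX HP) Hlb hsZr (hsPP HP).
have e3 : hs (E a i) (P *m E b i *m P) = la^* * (lb * (\rank P)%:R).
  by rewrite (hsXPYP HP) Hla Hlb hsZl hsZr (hsPP HP).
rewrite e1 e2 e3; ring.
Qed.

End Enum.


Section Rep.
Variable R : realType.
Local Notation C := R[i].
Variables (n : nat) (G : Type) (gr : group_on G) (rho : G -> 'M[C]_n)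
  (Xi : finType) (m d : Xi -> nat)
  (E : forall xi, 'I_(m xi) -> 'I_(d xi) -> 'M[C]_n)
  (D : forall xi, G -> 'M[C]_(d xi)).
Local Notation Kt := {xi : Xi & ('I_(m xi) * 'I_(d xi))%type}.
Local Notation Ef := (Eflat E).
Hypothesis Hrep : unitary_rep gr rho.
Hypothesis Hmd : forall xi, (0 < m xi)%N /\ (0 < d xi)%N.
Hypothesis Hon : forall k l, hs (Ef k) (Ef l) = (k == l)%:R.
Hypothesis Hsp : forall X : 'M[C]_n, exists c, X = \sum_k c k *: Ef k.
Hypothesis Hirr : forall xi (a : 'I_(m xi)), irreducible_sub E rho a.
Hypothesis Heq : forall xi g (a : 'I_(m xi)) (i : 'I_(d xi)),
      act rho g (E a i) = \sum_(j < d xi) D xi g j i *: E a j.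
Hypothesis Hineq : forall xi xi', xi != xi' -> forall T : 'M[C]_(d xi', d xi),
      (forall g, T *m D xi g = D xi' g *m T) -> T = 0.

Lemma U1 g : rho g *m adj (rho g) = 1%:M.
Proof. by case: Hrep => _ [_ ->]. Qed.

Lemma U2 g : adj (rho g) *m rho g = 1%:M.
Proof. by apply: mulmx1C; exact: U1. Qed.

Lemma act_hs g (X Y : 'M[C]_n) : hs (act rho g X) (act rho g Y) = hs X Y.
Proof.
rewrite /hs /act !dadjM dadjK !mulmxA -[rho g *m adj X *m adj (rho g) *m rho g]mulmxA U2 mulmx1.
by rewrite mxtrace_mulC !mulmxA U2 mul1mx.

Qed.

Lemma act_mul g (X Y : 'M[C]_n) : act rho g (X *m Y) = act rho g X *m act rho g Y.
Proof.
by rewrite /act !mulmxA -[rho g *m X *m adj (rho g) *m rho g]mulmxA U2 mulmx1.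
Qed.

Lemma act_adj g (X : 'M[C]_n) : act rho g (adj X) = adj (act rho g X).
Proof. by rewrite /act !dadjM dadjK mulmxA. Qed.

Lemma act_sum g (I : finType) (F : I -> 'M[C]_n) :
  act rho g (\sum_i F i) = \sum_i act rho g (F i).
Proof. by rewrite /act mulmx_sumr mulmx_suml. Qed.

Lemma act_scale g c (X : 'M[C]_n) : act rho g (c *: X) = c *: act rho g X.
Proof. by rewrite /act -scalemxAr -scalemxAl. Qed.

Lemma hs_exp xi (a : 'I_(m xi)) (x y : 'I_(d xi) -> C) :
  hs (\sum_k x k *: E a k) (\sum_l y l *: E a l) = \sum_k (x k)^* * y k.
Proof.
rewrite hs_suml; apply: eq_bigr => k _; rewrite hsZl hs_sumr.
rewrite (bigD1 k) //= [X in _ + X]big1 ?addr0; last first.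
  by move=> l Hl; rewrite hsZr (hsE_same Hon) eqxx /= eq_sym (negbTE Hl) mulr0.
by rewrite hsZr (hsE_same Hon) !eqxx mulr1.
Qed.

Lemma D_unit xi g : adj (D xi g) *m D xi g = 1%:M.
Proof.
have [Hm _] := Hmd xi.
pose a : 'I_(m xi) := Ordinal Hm.
apply/matrixP => i j.
have := act_hs g (E a i) (E a j).
rewrite !Heq hs_exp (hsE_same Hon) eqxx /= => H.
by rewrite [RHS]mxE -H [LHS]mxE; apply: eq_bigr => k _; rewrite dadjE.
Qed.

Lemma D_unit2 xi g : D xi g *m adj (D xi g) = 1%:M.
Proof. by apply: mulmx1C; exact: D_unit. Qed.

Lemma D_row xi g (i k : 'I_(d xi)) :
  \sum_j (D xi g k j)^* * D xi g i j = (i == k)%:R.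
Proof.
have := congr1 (fun M : 'M[C]_(d xi) => M i k) (D_unit2 xi g).
rewrite !mxE => <-; apply: eq_bigr => j _; by rewrite dadjE mulrC.
Qed.

Lemma sandwich (I J : finType) (x : I -> C) (y : J -> C) (A : I -> 'M[C]_n)
  (B : J -> 'M[C]_n) (X : 'M[C]_n) :
  (\sum_k x k *: A k) *m X *m (\sum_l y l *: B l) =
  \sum_k \sum_l (x k * y l) *: (A k *m X *m B l).
Proof.
rewrite mulmx_suml mulmx_suml; apply: eq_bigr => k _.
rewrite mulmx_sumr; apply: eq_bigr => l _.
by rewrite -!scalemxAl -scalemxAr scalerA.
Qed.

Lemma Tw_act rh (mu nu : 'I_(m rh)) g (X : 'M[C]_n) :
  act rho g (Twirl E mu nu X) = Twirl E mu nu (act rho g X).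
Proof.
rewrite /Twirl act_sum.
under eq_bigr => j _ do rewrite !act_mul act_adj !Heq dadj_sum.
under eq_bigr => j _ do under eq_bigr => k _ do rewrite dadjZ.
under eq_bigr => j _ do rewrite sandwich.
rewrite exchange_big; apply: eq_bigr => k _.
rewrite exchange_big /= (bigD1 k) //= [X in _ + X]big1 ?addr0; last first.
  by move=> l Hl; rewrite -scaler_suml D_row (negbTE Hl) scale0r.
by rewrite -scaler_suml D_row eqxx scale1r.
Qed.



Lemma Tw_lin rh (mu nu : 'I_(m rh)) (I : finType) (c : I -> C) (X : I -> 'M[C]_n) :
  Twirl E mu nu (\sum_k c k *: X k) = \sum_k c k *: Twirl E mu nu (X k).
Proof.
rewrite /Twirl; under eq_bigr => j _ do rewrite mulmx_sumr mulmx_suml.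
rewrite exchange_big; apply: eq_bigr => k _; rewrite scaler_sumr.
by apply: eq_bigr => j _; rewrite -scalemxAr -scalemxAl.
Qed.

Definition Mx xi xi' (a : 'I_(m xi)) (b : 'I_(m xi')) rh (mu nu : 'I_(m rh)) :
  'M[C]_(d xi', d xi) := \matrix_(i, i') hs (E b i) (Twirl E mu nu (E a i')).

Lemma Mx_eq xi xi' (a : 'I_(m xi)) (b : 'I_(m xi')) rh (mu nu : 'I_(m rh)) g :
  Mx a b mu nu = adj (D xi' g) *m Mx a b mu nu *m D xi g.
Proof.
apply/matrixP => i i'; rewrite [LHS]mxE -(act_hs g) Tw_act !Heq Tw_lin hs_suml.
rewrite [RHS]mxE; under [RHS]eq_bigr => k _ do rewrite mxE mulr_suml.
rewrite [RHS]exchange_big; apply: eq_bigr => j _.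
rewrite hsZl hs_sumr mulr_sumr; apply: eq_bigr => k _.
by rewrite hsZr dadjE !mxE; ring.
Qed.

Lemma Mx_comm xi xi' (a : 'I_(m xi)) (b : 'I_(m xi')) rh (mu nu : 'I_(m rh)) g :
  Mx a b mu nu *m D xi g = D xi' g *m Mx a b mu nu.
Proof.
by rewrite {2}(Mx_eq _ _ _ _ g) !mulmxA D_unit2 mul1mx.
Qed.

Lemma Mx_diff xi xi' (a : 'I_(m xi)) (b : 'I_(m xi')) rh (mu nu : 'I_(m rh)) i i' :
  xi != xi' -> hs (E b i) (Twirl E mu nu (E a i')) = 0.
Proof.
move=> Hne; have := Hineq Hne (@Mx_comm xi xi' a b rh mu nu).
move/matrixP => /(_ i i'); by rewrite !mxE.
Qed.

Lemma hs0r (X : 'M[C]_n) : hs X 0 = 0.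
Proof. by rewrite /hs mulmx0 mxtrace0. Qed.

Lemma schur xi (M : 'M[C]_(d xi)) :
  (forall g, M *m D xi g = D xi g *m M) -> exists l, M = l%:M.
Proof.
move=> HM.
have [Hm Hd] := Hmd xi.
pose a0 : 'I_(m xi) := Ordinal Hm.
have Yexp : forall r : 'rV[C]_(d xi), vec_mx (r *m Espan E a0) = \sum_i r 0 i *: E a0 i.
  move=> r; rewrite mulmx_sum_row linear_sum; apply: eq_bigr => i _.
  by rewrite linearZ /= /Espan rowK mxvecK.
have Ycoef : forall (r : 'rV[C]_(d xi)) j, hs (E a0 j) (vec_mx (r *m Espan E a0)) = r 0 j.
  move=> r j; rewrite Yexp hs_sumr (bigD1 j) //= [X in _ + X]big1 ?addr0; last first.
    by move=> i Hi; rewrite hsZr (hsE_same Hon) eqxx /= eq_sym (negbTE Hi) mulr0.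
  by rewrite hsZr (hsE_same Hon) !eqxx mulr1.
have Yact : forall g (r : 'rV[C]_(d xi)),
    act rho g (vec_mx (r *m Espan E a0)) = vec_mx ((r *m (D xi g)^T) *m Espan E a0).
  move=> g r; rewrite !Yexp act_sum.
  under eq_bigr => i _ do rewrite act_scale Heq scaler_sumr.
  rewrite exchange_big; apply: eq_bigr => j _.
  rewrite !mxE scaler_suml; apply: eq_bigr => i _.
  by rewrite scalerA mxE.
have /closed_rootP [l Hl] : size (char_poly M^T) != 1.
  by rewrite size_char_poly; case: (d xi) Hd.
have Hev : eigenvalue M^T l by rewrite eigenvalue_root_char.
set N := eigenspace M^T l.
have Ninv : forall r : 'rV[C]_(d xi), (r <= N)%MS -> forall g, (r *m (D xi g)^T <= N)%MS.
  move=> r /sub_kermxP Hr g; apply/sub_kermxP.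
  have HC : (D xi g)^T *m (M^T - l%:M) = (M^T - l%:M) *m (D xi g)^T.
    by rewrite mulmxBr mulmxBl -!trmx_mul HM scalar_mxC.
  by rewrite -mulmxA HC mulmxA Hr mul0mx.
set W := N *m Espan E a0.
have Winv : g_invariant rho W.
  move=> g v /submxP [x ->]; rewrite /W mulmxA Yact vec_mxK.
  by apply: submxMr; apply: Ninv; apply: submxMl.
have [_ Hir] := Hirr a0.
case: (Hir _ W (submxMl _ _) Winv) => [HW0|HWf].
  exfalso; move: Hev; rewrite /eigenvalue -/N; apply/negP; rewrite negbK.
  apply/eqP/row_matrixP => i; apply/rowP => j.
  have : row i N *m Espan E a0 = 0 by rewrite -row_mul -/W HW0 row0.
  by move=> H0; rewrite -Ycoef H0 linear0 hs0r !mxE.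
have H1N : (1%:M <= N)%MS.
  apply/row_subP => j.
  have /submxP [x Hx] := submx_trans (row_sub j (Espan E a0)) HWf.
  have -> : row j (1%:M : 'M[C]_(d xi)) = x *m N.
    apply/rowP => k; rewrite -[(x *m N) 0 k]Ycoef -mulmxA -/W -Hx /Espan rowK mxvecK (hsE_same Hon) eqxx /=.
    by rewrite !mxE eq_sym.
  exact: submxMl.
move/sub_kermxP: H1N; rewrite mul1mx => /eqP; rewrite subr_eq0 => /eqP HMt.
by exists l; rewrite -(trmxK M) HMt tr_scalar_mx.
Qed.


Lemma Tw_sum rh (mu nu : 'I_(m rh)) (I : finType) (X : I -> 'M[C]_n) :
  Twirl E mu nu (\sum_k X k) = \sum_k Twirl E mu nu (X k).
Proof.
have := Tw_lin mu nu (fun _ => 1) X.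
under eq_bigr => k _ do rewrite scale1r.
by move=> ->; apply: eq_bigr => k _; rewrite scale1r.
Qed.

Lemma Tw_scale rh (mu nu : 'I_(m rh)) c (X : 'M[C]_n) :
  Twirl E mu nu (c *: X) = c *: Twirl E mu nu X.
Proof.
rewrite /Twirl scaler_sumr; apply: eq_bigr => j _.
by rewrite -scalemxAr -scalemxAl.
Qed.

Definition tt xi (a b : 'I_(m xi)) rh (mu nu : 'I_(m rh)) : C :=
  (d xi)%:R^-1 * \sum_j hs (E b j) (Twirl E mu nu (E a j)).

Lemma Mx_same xi (a b : 'I_(m xi)) rh (mu nu : 'I_(m rh)) i i' :
  hs (E b i) (Twirl E mu nu (E a i')) = (i == i')%:R * tt a b mu nu.
Proof.
have [l Hl] := schur (@Mx_comm xi xi a b rh mu nu).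
have Hent : forall j j', hs (E b j) (Twirl E mu nu (E a j')) = l * (j == j')%:R.
  move=> j j'; have := congr1 (fun M : 'M[C]_(d xi) => M j j') Hl.
  by rewrite /Mx !mxE => ->; rewrite mulr_natr.
have Hd : (d xi)%:R != 0 :> C by rewrite pnatr_eq0 -lt0n; case: (Hmd xi).
have -> : tt a b mu nu = l.
  rewrite /tt (eq_bigr (fun _ => l)); last by move=> j _; rewrite Hent eqxx mulr1.
  by rewrite sumr_const card_ord -[l *+ _]mulr_natl mulrA mulVf // mul1r.
by rewrite Hent mulrC.
Qed.

Lemma sdotE xi (a b : 'I_(m xi)) rh (mu nu : 'I_(m rh)) :
  sdot (Pimu E a b) (Twirl E mu nu) = \sum_i hs (E b i) (Twirl E mu nu (E a i)).
Proof.
rewrite /sdot.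
under eq_bigr => p _ do under eq_bigr => q _ do rewrite /Pimu hs_suml.
have H : forall i, hs (E b i) (Twirl E mu nu (E a i)) =
  \sum_p \sum_q (E a i) p q * hs (E b i) (Twirl E mu nu (delta_mx p q)).
  move=> i; rewrite {1}(matrix_sum_delta (E a i)) Tw_sum hs_sumr.
  apply: eq_bigr => p _; rewrite Tw_sum hs_sumr; apply: eq_bigr => q _.
  by rewrite Tw_scale hsZr.
under [RHS]eq_bigr => i _ do rewrite H.
rewrite [RHS]exchange_big; apply: eq_bigr => p _.
rewrite [RHS]exchange_big; apply: eq_bigr => q _.
apply: eq_bigr => i _.
by rewrite hsZl hsC hs_delta.
Qed.

Lemma macW (P : 'M[C]_n) : macwilliams_rel E (Aenum E P) (Benum E P).
Proof.
move=> rh mu nu.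
have HTw : forall xi' (b : 'I_(m xi')) i,
    hs (E b i) (Twirl E mu nu P) = \sum_a hs (E a i) P * tt a b mu nu.
  move=> xi' b i.
  rewrite {1}(expandE Hon Hsp P) Tw_lin hs_sumr sumKt.
  rewrite (bigD1 xi') //= [X in _ + X]big1 ?addr0; last first.
    move=> xi Hne; apply: big1 => a _; apply: big1 => i' _.
    by rewrite hsZr Mx_diff ?mulr0.
  apply: eq_bigr => a _.
  rewrite (bigD1 i) //= [X in _ + X]big1 ?addr0; last first.
    by move=> i' Hi'; rewrite hsZr Mx_same eq_sym (negbTE Hi') mul0r mulr0.
  by rewrite hsZr Mx_same eqxx mul1r.
rewrite mxE (parseval Hon Hsp) sumKt; apply: eq_bigr => xi _.
under eq_bigr => b _ do under eq_bigr => i _ do rewrite /Eflat /= HTw mulr_sumr.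
have HM : forall (a b : 'I_(m xi)), MacW E a b mu nu = tt a b mu nu.
  by move=> a b; rewrite /MacW sdotE.
under [RHS]eq_bigr => a _ do under eq_bigr => b _ do rewrite HM AE mulr_sumr.
under eq_bigr => b _ do rewrite exchange_big.
rewrite exchange_big; apply: eq_bigr => a _.
apply: eq_bigr => b _; apply: eq_bigr => i _.
by rewrite /=; ring.
Qed.

End Rep.


Unset Implicit Arguments.

Theorem mainTheorem19
  (R : realType) (n : nat)
  (G : Type) (gr : group_on G) (rho : G -> 'M[R[i]]_n)
  (Xi : finType) (m d : Xi -> nat)
  (E : forall xi, 'I_(m xi) -> 'I_(d xi) -> 'M[R[i]]_n)
  (D : forall xi, G -> 'M[R[i]]_(d xi))
  (S : {set Xi}) (K : nat) (P : 'M[R[i]]_n) :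
  (* rho is a unitary representation of G on V = C^n *)
  unitary_rep gr rho ->
  (* every type occurs *)
  (forall xi, (0 < m xi)%N /\ (0 < d xi)%N) ->
  (* {E_i^alpha (xi)} is an orthonormal basis of L(V) *)
  (forall k l, hs (Eflat E k) (Eflat E l) = (k == l)%:R) ->
  (forall X : 'M[R[i]]_n, exists c, X = \sum_k c k *: Eflat E k) ->
  (* each E_{xi alpha} is G-irreducible *)
  (forall xi (a : 'I_(m xi)), irreducible_sub E rho a) ->
  (* equivariance: in the bases E^alpha, G acts on every E_{xi alpha} by the
     same matrices D xi g (i.e. the maps E_i^1 |-> E_i^alpha are
     G-equivariant isometries) *)
  (forall xi g (a : 'I_(m xi)) (i : 'I_(d xi)),
      act rho g (E xi a i) = \sum_(j < d xi) D xi g j i *: E xi a j) ->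
  (* distinct xi are inequivalent irreducible types *)
  (forall xi xi', xi != xi' -> forall T : 'M[R[i]]_(d xi', d xi),
      (forall g, T *m D xi g = D xi' g *m T) -> T = 0) ->
  (* C = range P is a K-dimensional subspace detecting all errors in E_xi, xi in S *)
  orth_projector P -> \rank P = K ->
  (forall xi, xi \in S -> detects_sector E P xi) ->
  exists (A B : forall xi, 'M[R[i]]_(m xi)),
    [/\ A = Aenum E P /\ B = Benum E P,
        (forall xi, herm_mx (A xi) /\ herm_mx (B xi)),
        (forall xi, psd_mx (A xi)),
        (forall xi, loewner_le (A xi) (K%:R *: B xi)) &
        [/\ \sum_xi \tr (A xi) = K%:R,
            \sum_xi \tr (B xi) = K%:R ^+ 2,
            macwilliams_rel E A B &
            (forall xi, xi \in S -> A xi = K%:R *: B xi)]].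
Proof.
Proof.
move=> Hrep Hmd Hon Hsp Hirr Heq Hineq HP HK HS.
exists (Aenum E P), (Benum E P).
split.
- by [].
- by move=> xi; split; [apply: A_herm | apply: B_herm].
- by move=> xi; apply: A_psd.
- by move=> xi; rewrite -HK; apply: A_loew.
- split.
  + by rewrite -HK; apply: (sumtrA Hon Hsp).
  + by rewrite -HK; apply: (sumtrB Hon Hsp).
  + exact: (macW Hrep Hmd Hon Hsp Hirr Heq Hineq P).
  + by move=> xi Hxi; rewrite -HK; apply: A_KB_S => //; apply: HS.
Qed.
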